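(* Let $\mathbf{A}\in\mathbb{R}^{n\times d}$, $\mathbf{B}=[\mathbf{b}_1,\dots,\mathbf{b}_{d_B}]\in\mathbb{R}^{n\times d_B}$, $\mathbf{C}=[\mathbf{c}_1,\dots,\mathbf{c}_{n_C}]^{\rm T}\in\mathbb{R}^{n_C\times d}$, and let $k,r$ be integers with $1\le k\le\mathrm{rank}(\mathbf{B})$, $1\le r\le\mathrm{rank}(\mathbf{C})$. Let $S$ be an $l$-subset of $[d_B]$ with $0\le l\le k-1$ and $R$ a $t$-subset of $[n_C]$ with $0\le t\le r-1$. Then $$P_{k-l,r-t}(x;\mathbf{Q}_S\mathbf{A}\mathbf{P}_R,\mathbf{Q}_S\mathbf{B},\mathbf{C}\mathbf{P}_R)=\frac1{k-l}\sum_{i:\|\mathbf{Q}_S\mathbf{b}_i\|\ne0}\|\mathbf{Q}_S\mathbf{b}_i\|^2\,P_{k-l-1,r-t}(x;\mathbf{Q}_{S\cup\{i\}}\mathbf{A}\mathbf{P}_R,\mathbf{Q}_{S\cup\{i\}}\mathbf{B},\mathbf{C}\mathbf{P}_R)$$ and $$P_{k-l,r-t}(x;\mathbf{Q}_S\mathbf{A}\mathbf{P}_R,\mathbf{Q}_S\mathbf{B},\mathbf{C}\mathbf{P}_R)=\frac1{r-t}\sum_{i:\|\mathbf{c}_i^{\rm T}\mathbf{P}_R\|\ne0}\|\mathbf{c}_i^{\rm T}\mathbf{P}_R\|^2\,P_{k-l,r-t-1}(x;\mathbf{Q}_S\mathbf{A}\mathbf{P}_{R\cup\{i\}},\mathb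f{Q}_S\mathbf{B},\mathbf{C}\mathbf{P}_{R\cup\{i\}}).$$
   Context: Notation: $\mathbf{M}_{R,S}$, $\mathbf{M}_{:,S}$, $\mathbf{M}_{R,:}$ are submatrices; $\mathbf{M}^\dagger$ Moore–Penrose pseudoinverse with $\mathbf{M}_{R,S}^\dagger:=(\mathbf{M}_{R,S})^\dagger$; empty determinants are $1$ and $\mathbf{M}_{:,\emptyset}\mathbf{M}_{:,\emptyset}^\dagger$, $\mathbf{M}_{\emptyset,:}^\dagger\mathbf{M}_{\emptyset,:}$ are zero. $\mathbf{Q}_S=\mathbf{I}_n-\mathbf{B}_{:,S}\mathbf{B}_{:,S}^\dagger$ and $\mathbf{P}_R=\mathbf{I}_d-\mathbf{C}_{R,:}^\dagger\mathbf{C}_{R,:}$ (always formed from the original $\mathbf{B},\mathbf{C}$). For general $\mathbf{A}'\in\mathbb{R}^{n\times d}$, $\mathbf{B}'\in\mathbb{R}^{n\times d_B}$, $\mathbf{C}'\in\mathbb{R}^{n_C\times d}$: $p_{T,W}(x;\mathbf{A}',\mathbf{B}',\mathbf{C}')=\det[x\mathbf{I}_d-(\mathbf{Q}'_T\mathbf{A}'\mathbf{P}'_W)^{\rm T}(\mathbf{Q}'_T\mathbf{A}'\mathbf{P}'_W)]$ with $\mathbf{Q}'_T=\mathbf{I}_n-\mathbf{B}'_{:,T}\mathbf{B}'^\dagger_{:,T}$, $\mathbf{P}'_W=\mathbf{I}_d-\mathbf{C}'^\dagger_{W,:}\mathbf{C}'_{W,:}$, and $P_{k,r}(x;\mathbf{A}',\mathbf{B}',\mathbf{C}')=\sum_{W\subset[n_C],|W|=r}\sum_{T\subset[d_B],|T|=k}\det[\mathbf{C}'_{W,:}\mathbf{C}'^{\rm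 T}_{W,:}]\det[\mathbf{B}'^{\rm T}_{:,T}\mathbf{B}'_{:,T}]\,p_{T,W}(x;\mathbf{A}',\mathbf{B}',\mathbf{C}')$. *)

(* Defs.v *)
From HB Require Import structures.
From mathcomp Require Import all_boot all_order all_algebra.
From mathcomp Require Import boolp classical_sets reals.
Set Implicit Arguments. Unset Strict Implicit. Unset Printing Implicit Defensive.
Import Order.TTheory GRing.Theory Num.Theory.
Local Open Scope ring_scope.

Section Defs.
Variable R : realType.

(* Moore-Penrose pseudoinverse: the (unique, always existing) matrix X satisfying
   the four Penrose equations. *)
Definition penrose {m n} (M : 'M[R]_(m, n)) (X : 'M[R]_(n, m)) : Prop :=
  [/\ M *m X *m M = M, X *m M *m X = X, (M *m X)^T = M *m X & (X *m M)^T = X *m M].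

Definition pinv {m n} (M : 'M[R]_(m, n)) : 'M[R]_(n, m) := xget 0 (penrose M).

(* B_{:,T}: the columns of B indexed by T (in increasing order). *)
Definition colsS {n dB} (B : 'M[R]_(n, dB)) (T : {set 'I_dB}) : 'M[R]_(n, #|T|) :=
  colsub (fun j : 'I_#|T| => enum_val j) B.

(* C_{W,:}: the rows of C indexed by W (in increasing order). *)
Definition rowsS {nC d} (C : 'M[R]_(nC, d)) (W : {set 'I_nC}) : 'M[R]_(#|W|, d) :=
  rowsub (fun j : 'I_#|W| => enum_val j) C.

Definition Qproj {n dB} (B : 'M[R]_(n, dB)) (T : {set 'I_dB}) : 'M[R]_n :=
  1%:M - colsS B T *m pinv (colsS B T).

Definition Pproj {nC d} (C : 'M[R]_(nC, d)) (W : {set 'I_nC}) : 'M[R]_d :=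
  1%:M - pinv (rowsS C W) *m rowsS C W.

Definition pTW {n d dB nC} (A : 'M[R]_(n, d)) (B : 'M[R]_(n, dB)) (C : 'M[R]_(nC, d))
  (T : {set 'I_dB}) (W : {set 'I_nC}) : {poly R} :=
  let M := Qproj B T *m A *m Pproj C W in char_poly (M^T *m M).

Definition Pkr {n d dB nC} (k r : nat) (A : 'M[R]_(n, d)) (B : 'M[R]_(n, dB))
  (C : 'M[R]_(nC, d)) : {poly R} :=
  \sum_(W : {set 'I_nC} | #|W| == r) \sum_(T : {set 'I_dB} | #|T| == k)
     (\det (rowsS C W *m (rowsS C W)^T) * \det ((colsS B T)^T *m colsS B T))
       *: pTW A B C T W.

Definition vnorm {p q} (v : 'M[R]_(p, q)) : R :=
  Num.sqrt (\sum_i \sum_j v i j ^+ 2).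

End Defs.

(* Main.v *)
Require Import Defs.
From HB Require Import structures.
From mathcomp Require Import all_boot all_order all_algebra.
From mathcomp Require Import boolp classical_sets reals.
From mathcomp Require Import fingroup perm.
Import Order.TTheory GRing.Theory Num.Theory.
Local Open Scope ring_scope.
Set Implicit Arguments. Unset Strict Implicit. Unset Printing Implicit Defensive.


Section Aux.
Variable R : realType.

Lemma mulmx_tr_eq0 m p (M : 'M[R]_(m, p)) : M *m M^T = 0 -> M = 0.
Proof.
move=> H; apply/matrixP => i j; rewrite mxE.
have := congr1 (fun X : 'M[R]_m => X i i) H.
rewrite !mxE => /eqP; rewrite psumr_eq0; last by move=> k _; rewrite mxE -expr2 sqr_ge0.
move=> /allP /(_ j (mem_index_enum _)) /implyP /(_ isT).
by rewrite mxE -expr2 sqrf_eq0 => /eqP.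
Qed.

Lemma gram_unit m p (G : 'M[R]_(m, p)) : row_free G -> G *m G^T \in unitmx.
Proof.
move=> fG; rewrite unitmxE unitfE; apply/negP => /det0P [v vn0].
rewrite mulmxA => H.
have : v *m G = 0.
  apply: mulmx_tr_eq0; by rewrite trmx_mul mulmxA H mul0mx.
move=> H2; move/negP: vn0; apply; apply/eqP.
by apply: (row_free_inj fG); rewrite H2 mul0mx.
Qed.

Lemma penrose_ex_fact m p r (M : 'M[R]_(m, p)) (F : 'M[R]_(m, r)) (G : 'M[R]_(r, p)) :
  M = F *m G -> row_free G -> row_free F^T -> exists X, penrose M X.
Proof.
move=> -> fG fF.
have uG := gram_unit fG; have uF := gram_unit fF; rewrite trmxK in uF.
set Gi := invmx (G *m G^T); set Fi := invmx (F^T *m F).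
have eG : G *m G^T *m Gi = 1%:M by exact: mulmxV.
have eF : Fi *m (F^T *m F) = 1%:M by exact: mulVmx.
exists (G^T *m Gi *m Fi *m F^T).
have MX : F *m G *m (G^T *m Gi *m Fi *m F^T) = F *m Fi *m F^T.
  by rewrite !mulmxA -(mulmxA F G) -(mulmxA F (G *m G^T)) eG mulmx1.
have XM : (G^T *m Gi *m Fi *m F^T) *m (F *m G) = G^T *m Gi *m G.
  by rewrite -!mulmxA (mulmxA F^T) (mulmxA Fi) eF mul1mx.
split.
- by rewrite MX -!mulmxA (mulmxA F^T) (mulmxA Fi) eF mul1mx.
- rewrite XM -!mulmxA (mulmxA G) (mulmxA Gi (G *m G^T)).
  by rewrite (mulVmx uG) mul1mx.
- by rewrite MX !trmx_mul trmxK trmx_inv trmx_mul trmxK !mulmxA.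
- by rewrite XM !trmx_mul trmxK trmx_inv trmx_mul trmxK !mulmxA.
Qed.

Lemma penrose_ex m p (M : 'M[R]_(m, p)) : exists X, penrose M X.
Proof.
apply: (@penrose_ex_fact _ _ _ M (col_base M) (row_base M)).
- by rewrite mulmx_base.
- exact: row_base_free.
- by rewrite /row_free mxrank_tr; exact: col_base_full.
Qed.

Lemma pinvP m p (M : 'M[R]_(m, p)) : penrose M (pinv M).
Proof. by rewrite /pinv; apply: xgetPex; exact: penrose_ex. Qed.

End Aux.


Section Proj.
Variable R : realType.
Implicit Types (m p q : nat).

Definition cspan m p q (M : 'M[R]_(m, p)) (N : 'M[R]_(m, q)) := (N^T <= M^T)%MS.

Lemma cspanP m p q (M : 'M[R]_(m, p)) (N : 'M[R]_(m, q)) :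
  cspan M N <-> exists Y, N = M *m Y.
Proof.
split.
- by move/submxP => [D HD]; exists D^T; rewrite -[N]trmxK HD trmx_mul trmxK.
- by move=> [Y ->]; rewrite /cspan trmx_mul submxMl.
Qed.

Lemma cspan_trans m p1 p2 p3 (M : 'M[R]_(m, p1)) (N : 'M[R]_(m, p2)) (K : 'M[R]_(m, p3)) :
  cspan M N -> cspan N K -> cspan M K.
Proof. by move=> h1 h2; exact: submx_trans h2 h1. Qed.

Lemma cspan_refl m p (M : 'M[R]_(m, p)) : cspan M M.
Proof. exact: submx_refl. Qed.

Lemma cspan_mulr m p q r (M : 'M[R]_(m, p)) (N : 'M[R]_(m, q)) (Y : 'M[R]_(q, r)) :
  cspan M N -> cspan M (N *m Y).
Proof. by move=> h; apply: cspan_trans h _; apply/cspanP; exists Y. Qed.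

Lemma cspan_add m p q (M : 'M[R]_(m, p)) (N K : 'M[R]_(m, q)) :
  cspan M N -> cspan M K -> cspan M (N + K).
Proof. by move=> h1 h2; rewrite /cspan linearD /=; exact: addmx_sub. Qed.

Lemma cspan_opp m p q (M : 'M[R]_(m, p)) (N : 'M[R]_(m, q)) :
  cspan M N -> cspan M (- N).
Proof. by move=> h; rewrite /cspan linearN /= eqmx_opp. Qed.

Lemma cspan_sub m p q (M : 'M[R]_(m, p)) (N K : 'M[R]_(m, q)) :
  cspan M N -> cspan M K -> cspan M (N - K).
Proof. by move=> h1 h2; apply: cspan_add => //; apply: cspan_opp. Qed.

Lemma cspan_fix m p q (M : 'M[R]_(m, p)) (N : 'M[R]_(m, q)) (P : 'M[R]_m) :
  cspan M N -> P *m M = M -> P *m N = N.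
Proof. by move=> /cspanP [Y ->] h; rewrite mulmxA h. Qed.

Definition Pi m p (M : 'M[R]_(m, p)) : 'M[R]_m := M *m pinv M.

Lemma Pi_sym m p (M : 'M[R]_(m, p)) : (Pi M)^T = Pi M.
Proof. by case: (pinvP M). Qed.

Lemma Pi_fix m p (M : 'M[R]_(m, p)) : Pi M *m M = M.
Proof. by case: (pinvP M). Qed.

Lemma Pi_span m p (M : 'M[R]_(m, p)) : cspan M (Pi M).
Proof. by apply/cspanP; exists (pinv M). Qed.

Lemma Pi_idem m p (M : 'M[R]_(m, p)) : Pi M *m Pi M = Pi M.
Proof. by rewrite {1}/Pi mulmxA Pi_fix. Qed.

Lemma Pi_char m p (M : 'M[R]_(m, p)) (P : 'M[R]_m) :
  P^T = P -> P *m M = M -> cspan M P -> Pi M = P.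
Proof.
move=> sP fP /cspanP [Y eP].
have h1 : Pi M *m P = P by rewrite eP mulmxA Pi_fix.
have h2 : P *m Pi M = Pi M by rewrite /Pi mulmxA fP.
by rewrite -Pi_sym -h2 trmx_mul sP Pi_sym h1.
Qed.

Lemma Pi_eq m p q (M1 : 'M[R]_(m, p)) (M2 : 'M[R]_(m, q)) :
  cspan M1 M2 -> cspan M2 M1 -> Pi M1 = Pi M2.
Proof.
move=> h12 h21; apply: Pi_char.
- exact: Pi_sym.
- by apply: cspan_fix h21 _; exact: Pi_fix.
- exact: cspan_trans h12 (Pi_span M2).
Qed.

Lemma Pi_penrose m p (M : 'M[R]_(m, p)) X : penrose M X -> Pi M = M *m X.
Proof.
case=> h1 h2 h3 h4; apply: Pi_char => //.
- by apply/cspanP; exists X.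
Qed.

Lemma colsS_mul n p dB (X : 'M[R]_(p, n)) (B : 'M[R]_(n, dB)) T :
  colsS (X *m B) T = X *m colsS B T.
Proof. by apply/matrixP => i j; rewrite !mxE; apply: eq_bigr => k _; rewrite !mxE. Qed.

Lemma colsS_entry n dB (B : 'M[R]_(n, dB)) T i j : colsS B T i j = B i (enum_val j).
Proof. by rewrite /colsS mxE. Qed.

Lemma cspan_col n dB (B : 'M[R]_(n, dB)) (T : {set 'I_dB}) x :
  x \in T -> cspan (colsS B T) (col x B).
Proof.
move=> xT; apply/cspanP; exists (delta_mx (enum_rank_in xT x) 0).
by rewrite -colE; apply/matrixP => i j; rewrite !mxE enum_rankK_in.
Qed.

Lemma cspan_colsS n dB p (M : 'M[R]_(n, p)) (B : 'M[R]_(n, dB)) (U : {set 'I_dB}) :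
  (forall x, x \in U -> cspan M (col x B)) -> cspan M (colsS B U).
Proof.
move=> h; apply/row_subP => j.
have -> : row j (colsS B U)^T = (col (enum_val j) B)^T.
  by apply/matrixP => a b; rewrite !mxE.
by apply: h; exact: enum_valP.
Qed.

Lemma cspan_colsS_sub n dB (B : 'M[R]_(n, dB)) (T U : {set 'I_dB}) :
  T \subset U -> cspan (colsS B U) (colsS B T).
Proof.
move=> /fintype.subsetP sTU; apply: cspan_colsS => x xT; apply: cspan_col; exact: sTU.
Qed.

Lemma fix_colsS n dB (B : 'M[R]_(n, dB)) (U : {set 'I_dB}) (P : 'M[R]_n) :
  (forall x, x \in U -> P *m col x B = col x B) -> P *m colsS B U = colsS B U.
Proof.
move=> h; apply/matrixP => i j; rewrite colsS_entry.
have := congr1 (fun Z : 'cV[R]_n => Z i 0) (h _ (enum_valP j)).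
rewrite !mxE => <-; apply: eq_bigr => k _; by rewrite !mxE.
Qed.

Lemma fix_col n dB (B : 'M[R]_(n, dB)) (U : {set 'I_dB}) x :
  x \in U -> Pi (colsS B U) *m col x B = col x B.
Proof. move=> xU; apply: cspan_fix (cspan_col B xU) (Pi_fix _). Qed.

Lemma Qproj_Pi n dB (B : 'M[R]_(n, dB)) T : Qproj B T = 1%:M - Pi (colsS B T).
Proof. by []. Qed.

Lemma Qproj_comp n dB (B : 'M[R]_(n, dB)) (S T : {set 'I_dB}) :
  Qproj (Qproj B S *m B) T *m Qproj B S = Qproj B (S :|: T).
Proof.
rewrite !Qproj_Pi colsS_mul.
set P1 := Pi (colsS B S); set X := 1%:M - P1.
set P2 := Pi (X *m colsS B T).
have P1X : P1 *m X = 0 by rewrite /X mulmxBr mulmx1 Pi_idem subrr.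
have P1P2 : P1 *m P2 = 0.
  have /cspanP [Y eY] := Pi_span (X *m colsS B T).
  by rewrite /P2 eY !mulmxA P1X !mul0mx.
have P2P1 : P2 *m P1 = 0.
  by rewrite -[P2]Pi_sym -[P1]Pi_sym -trmx_mul P1P2 trmx0.
have -> : Pi (colsS B (S :|: T)) = P1 + P2.
  apply: Pi_char.
  - by rewrite linearD /= !Pi_sym.
  - apply: fix_colsS => x; rewrite inE => /orP [xS|xT].
    + have e1 : P1 *m col x B = col x B by exact: fix_col.
      by rewrite mulmxDl e1 -{2}e1 mulmxA P2P1 mul0mx addr0.
    + have e2 : P2 *m (X *m col x B) = X *m col x B.
        have := fix_col (X *m B) xT; rewrite colsS_mul.
        by have -> : col x (X *m B) = X *m col x B by rewrite !colE mulmxA.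
      move: e2; rewrite /X !mulmxBl !mul1mx mulmxBr mulmxA P2P1 mul0mx subr0.
      by move=> e; rewrite mulmxDl e addrC subrK.
  - apply: cspan_add.
    + apply: cspan_trans (Pi_span _).
      apply: cspan_colsS_sub; exact: finset.subsetUl.
    + apply: cspan_trans (Pi_span _).
      rewrite /X mulmxBl mul1mx; apply: cspan_sub.
      * apply: cspan_colsS_sub; exact: finset.subsetUr.
      * apply: cspan_mulr; apply: cspan_trans (Pi_span _).
        apply: cspan_colsS_sub; exact: finset.subsetUl.
rewrite /X mulmxBl mul1mx mulmxBr mulmx1 P2P1 subr0.
by rewrite opprD addrA.
Qed.

End Proj.


Section Gram.
Variable R : realType.

Definition gram m p (M : 'M[R]_(m, p)) := \det (M^T *m M).

Lemma gram_perm m p (M : 'M[R]_(m, p)) (s : 'S_p) : gram (M *m perm_mx s) = gram M.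
Proof.
rewrite /gram trmx_mul tr_perm_mx mulmxA -(mulmxA _ M^T) !det_mulmx.
rewrite mulrC mulrA -det_mulmx -perm_mxM mulgV perm_mx1 det1 mul1r.
by [].
Qed.

Lemma gram_reindex n dB (M : 'M[R]_(n, dB)) m1 m2 (f : 'I_m1 -> 'I_dB) (g : 'I_m2 -> 'I_dB) :
  injective f -> injective g -> codom f =i codom g ->
  gram (colsub f M) = gram (colsub g M).
Proof.
move=> injf injg e.
have e12 : m1 = m2.
  by rewrite -[m1]card_ord -[m2]card_ord -(card_codom injf) -(card_codom injg); apply: eq_card.
subst m2.
have hg : forall j, g j \in codom f by move=> j; rewrite e codom_f.
pose sg j := odflt j [pick a | f a == g j].
have sgP : forall j, f (sg j) = g j.
  move=> j; rewrite /sg; case: pickP => [a /eqP //|H].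
  by move: (hg j) => /codomP [a ea]; move: (H a); rewrite -ea eqxx.
have sginj : injective sg.
  by move=> j1 j2 ej; apply: injg; rewrite -!sgP ej.
pose s := perm.perm sginj.
have -> : colsub g M = colsub f M *m perm_mx s^-1.
  rewrite -col_permE; apply/matrixP => i j; rewrite !mxE perm.permE sgP //.
by rewrite gram_perm.
Qed.

Lemma gram_col0 m p (M : 'M[R]_(m, p)) j : col j M = 0 -> gram M = 0.
Proof.
move=> h; apply/eqP/det0P; exists (delta_mx 0 j).
  apply/negP => /eqP /matrixP /(_ 0 j); rewrite !mxE !eqxx /= => /eqP.
  by rewrite oner_eq0.
by rewrite mulmxA -[delta_mx 0 j]trmxK -trmx_mul trmx_delta -colE h trmx0 mul0mx.
Qed.

End Gram.


Section Split.
Variable R : realType.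

Lemma codom_enum_val (dB : nat) (T : {set 'I_dB}) x :
  (x \in codom (fun j : 'I_#|T| => enum_val j)) = (x \in T).
Proof.
apply/codomP/idP => [[j ->]|xT]; first exact: enum_valP.
by exists (enum_rank_in xT x); rewrite enum_rankK_in.
Qed.

Lemma gram_mulE m p (Y : 'M[R]_(m, p)) (E : 'M[R]_p) : \det E = 1 -> gram (Y *m E) = gram Y.
Proof.
move=> dE; rewrite /gram trmx_mul mulmxA -(mulmxA _ Y^T) !det_mulmx det_tr dE.
by rewrite mul1r mulr1.
Qed.

Lemma vtv_eq0 m (v : 'cV[R]_m) : (v^T *m v) 0 0 = 0 -> v = 0.
Proof.
move=> h; have : v^T = 0.
  apply: mulmx_tr_eq0; rewrite trmxK [LHS]mx11_scalar h.
  by apply/matrixP => a b; rewrite !mxE mul0rn.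
by move/(congr1 trmx); rewrite trmxK trmx0.
Qed.

Lemma vnorm_sq m (v : 'cV[R]_m) : vnorm v ^+ 2 = (v^T *m v) 0 0.
Proof.
rewrite /vnorm sqr_sqrtr; last by apply: sumr_ge0 => i _; apply: sumr_ge0 => j _; exact: sqr_ge0.
rewrite mxE; apply: eq_bigr => k _; rewrite big_ord1 !mxE expr2.
by rewrite (ord1 (0 : 'I_1)).
Qed.

Lemma Pi_vec m (v : 'cV[R]_m) : v != 0 ->
  Pi v = ((v^T *m v) 0 0)^-1 *: (v *m v^T).
Proof.
move=> vn0; set s := (v^T *m v) 0 0.
have sn0 : s != 0 by apply/negP => /eqP /vtv_eq0 /eqP; apply/negP.
have vv : v^T *m v = s%:M by rewrite [LHS]mx11_scalar.
apply: Pi_char.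
- by rewrite linearZ /= trmx_mul trmxK.
- by rewrite -scalemxAl -mulmxA vv mul_mx_scalar scalerA mulVf // scale1r.
- by apply/cspanP; exists (s^-1 *: v^T); rewrite scalemxAr.
Qed.

Lemma Qproj_add1 n dB (B : 'M[R]_(n, dB)) (S : {set 'I_dB}) i :
  let v := col i (Qproj B S *m B) in v != 0 ->
  Qproj B (S :|: [set i]) = (1%:M - ((v^T *m v) 0 0)^-1 *: (v *m v^T)) *m Qproj B S.
Proof.
move=> v vn0; rewrite -Qproj_comp [Qproj (Qproj B S *m B) _]Qproj_Pi -Pi_vec //.
congr ((_ - _) *m _).
apply: Pi_eq.
- by apply: cspan_col; rewrite inE.
- by apply: cspan_colsS => x; rewrite inE => /eqP ->; exact: cspan_refl.
Qed.

Lemma gram_split n dB (B : 'M[R]_(n, dB)) (S T : {set 'I_dB}) i :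
  i \notin T -> col i (Qproj B S *m B) != 0 ->
  vnorm (col i (Qproj B S *m B)) ^+ 2 * gram (colsS (Qproj B (S :|: [set i]) *m B) T)
  = gram (colsS (Qproj B S *m B) (i |: T)).
Proof.
move=> iT vn0; rewrite vnorm_sq.
set X := Qproj B S; set v := col i (X *m B); set s := (v^T *m v) 0 0.
have sn0 : s != 0 by apply/negP => /eqP /vtv_eq0 /eqP; apply/negP.
have vv : v^T *m v = s%:M by rewrite [LHS]mx11_scalar.
set U := colsS (X *m B) T.
set c := s^-1 *: (v^T *m U).
have eU' : colsS (Qproj B (S :|: [set i]) *m B) T = U - v *m c.
  rewrite (Qproj_add1 vn0) -/X -/v -/s -mulmxA colsS_mul -/U mulmxBl mul1mx.
  by rewrite -scalemxAl -mulmxA scalemxAr.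
rewrite eU'.
pose f := fun j : 'I_(1 + #|T|) => match split j with inl _ => i | inr j' => enum_val j' end.
have finj : injective f.
  move=> j1 j2; rewrite /f.
  case: splitP => [a ea|a ea]; case: splitP => [b eb|b eb].
  - by move=> _; apply: val_inj; rewrite /= ea eb (ord1 a) (ord1 b).
  - by move=> e; move: iT; rewrite e enum_valP.
  - by move=> e; move: iT; rewrite -e enum_valP.
  - by move=> /enum_val_inj e; apply: val_inj; rewrite /= ea eb e.
have -> : gram (colsS (X *m B) (i |: T)) = gram (colsub f (X *m B)).
  apply: gram_reindex => //; first exact: enum_val_inj.
  move=> x; rewrite codom_enum_val in_setU1; apply/orP/codomP.
  - case=> [/eqP ->|xT].
    + by exists (unsplit (inl (0 : 'I_1))); rewrite /f unsplitK.
    + exists (unsplit (inr (enum_rank_in xT x))); by rewrite /f unsplitK enum_rankK_in.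
  - case=> j ->; rewrite /f; case: (split j) => a; first by left.
    by right; exact: enum_valP.
have -> : colsub f (X *m B) = row_mx v U.
  apply/matrixP => a b; rewrite !mxE /f; case: (split b) => j; rewrite !mxE //.

pose E : 'M[R]_(1 + #|T|) := block_mx 1%:M (- c) 0 1%:M.
have dE : \det E = 1 by rewrite det_ublock !det1 mulr1.
rewrite -(gram_mulE (row_mx v U) dE) mul_row_block !mulmx1 !mulmx0 addr0 mulmxN [- _ + U]addrC.
set U' := U - v *m c.
have vU' : v^T *m U' = 0.
  rewrite /U' mulmxBr mulmxA vv mul_scalar_mx /c scalerA mulfV // scale1r subrr.
  by [].
rewrite /gram tr_row_mx mul_col_row vU'.
have -> : U'^T *m v = 0 by rewrite -[v]trmxK -trmx_mul vU' trmx0.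
by rewrite det_ublock vv det_scalar1.
Qed.

End Split.


Section Core.
Variable R : realType.

Lemma vnorm_neq0 m (v : 'cV[R]_m) : (vnorm v != 0) = (v != 0).
Proof.
rewrite -sqrf_eq0 vnorm_sq; apply/idP/idP => h; apply: contra h.
- by move=> /eqP ->; rewrite trmx0 mul0mx mxE.
- by move=> /eqP e; apply/eqP; apply: vtv_eq0.
Qed.

Lemma col_colsS n dB (B : 'M[R]_(n, dB)) (T : {set 'I_dB}) x (xT : x \in T) :
  col (enum_rank_in xT x) (colsS B T) = col x B.
Proof. by apply/matrixP => a b; rewrite !mxE enum_rankK_in. Qed.

Lemma gram_colsS0 n dB (B : 'M[R]_(n, dB)) (T : {set 'I_dB}) x :
  x \in T -> col x B = 0 -> gram (colsS B T) = 0.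
Proof. by move=> xT h; apply: (@gram_col0 _ _ _ _ (enum_rank_in xT x)); rewrite col_colsS. Qed.

Lemma Qproj_col0 n dB (B : 'M[R]_(n, dB)) (S : {set 'I_dB}) x :
  x \in S -> col x (Qproj B S *m B) = 0.
Proof.
move=> xS; have -> : col x (Qproj B S *m B) = Qproj B S *m col x B by rewrite !colE mulmxA.
by rewrite Qproj_Pi mulmxBl mul1mx fix_col // subrr.
Qed.

Lemma core n dB (B : 'M[R]_(n, dB)) (S : {set 'I_dB}) (m : nat)
  (F : {set 'I_dB} -> {poly R}) : (0 < m)%N ->
  \sum_(T : {set 'I_dB} | #|T| == m) gram (colsS (Qproj B S *m B) T) *: F (S :|: T)
  = m%:R^-1 *: \sum_(i : 'I_dB | vnorm (col i (Qproj B S *m B)) != 0)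
      vnorm (col i (Qproj B S *m B)) ^+ 2 *:
      \sum_(T : {set 'I_dB} | #|T| == m.-1)
         gram (colsS (Qproj B (S :|: [set i]) *m B) T) *: F ((S :|: [set i]) :|: T).
Proof.
move=> m0.
set X := Qproj B S.
pose g T := gram (colsS (X *m B) T) *: F (S :|: T).
have step1 : forall i, vnorm (col i (X *m B)) != 0 ->
   vnorm (col i (X *m B)) ^+ 2 *:
      \sum_(T : {set 'I_dB} | #|T| == m.-1)
         gram (colsS (Qproj B (S :|: [set i]) *m B) T) *: F ((S :|: [set i]) :|: T)
   = \sum_(T : {set 'I_dB} | (#|T| == m) && (i \in T)) g T.
  move=> i; rewrite vnorm_neq0 => vn0.
  rewrite [X in _ *: X](bigID (fun T : {set 'I_dB} => i \in T)) /= big1 ?add0r; last first.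
    move=> T /andP [_ iT]; rewrite (@gram_colsS0 _ _ _ _ i) ?scale0r //.
    by apply: Qproj_col0; rewrite !inE eqxx orbT.
  rewrite [RHS](reindex_onto (fun T => i |: T) (fun T => T :\ i)) /=; last first.
    by move=> T /andP [_ iT]; rewrite finset.setD1K.
  rewrite scaler_sumr; apply: eq_big => T.
  - rewrite finset.setU11 andbT cardsU1.
    case iT: (i \in T) => /=.
      rewrite andbF; symmetry; apply/negP => /andP [_ /eqP e].
      by have := finset.setD11 i (i |: T); rewrite e iT.
    rewrite finset.setU1K ?iT // eqxx andbT add1n.
    by rewrite andbT; case: m m0 => // m' _; rewrite eqSS.
  - move=> /andP [_ iT]; rewrite scalerA gram_split //.
    by rewrite /g finset.setUA.
rewrite (eq_bigr _ step1).
rewrite (exchange_big_dep (fun T : {set 'I_dB} => #|T| == m)) /=; last by move=> i T _ /andP [].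
rewrite scaler_sumr; apply: eq_bigr => T /eqP cT.
rewrite sumr_const.
have [g0|gn0] := eqVneq (gram (colsS (X *m B) T)) 0.
  by rewrite /g g0 scale0r mul0rn scaler0.
set c := (X in g T *+ X).
have -> : c = m.
  rewrite /c -[in RHS]cT; apply: eq_card => i; rewrite unfold_in /= cT eqxx /=.
  case iT: (i \in T); rewrite ?andbF ?andbT //.
  rewrite vnorm_neq0; apply/negP => /eqP h; move/eqP: gn0; apply.
  exact: gram_colsS0 iT h.
rewrite -scaler_nat scalerA mulVf ?scale1r //.
by rewrite pnatr_eq0 -lt0n.
Qed.

End Core.


Section Final.
Variable R : realType.

Lemma penrose_tr m p (M : 'M[R]_(m, p)) X : penrose M X -> penrose M^T X^T.
Proof.
case=> h1 h2 h3 h4; split.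
- by rewrite -!trmx_mul mulmxA h1.
- by rewrite -!trmx_mul mulmxA h2.
- by rewrite -trmx_mul trmxK h4.
- by rewrite -trmx_mul trmxK h3.
Qed.

Lemma rowsS_tr nC d (C : 'M[R]_(nC, d)) W : rowsS C W = (colsS C^T W)^T.
Proof. by apply/matrixP => a b; rewrite !mxE. Qed.

Lemma Pproj_tr nC d (C : 'M[R]_(nC, d)) W : (Pproj C W)^T = Qproj C^T W.
Proof.
have e : colsS C^T W = (rowsS C W)^T by rewrite rowsS_tr trmxK.
rewrite Qproj_Pi e (Pi_penrose (penrose_tr (pinvP (rowsS C W)))).
rewrite /Pproj (@raddfB _ _ (@trmx R d d)); congr (_ - _); last exact: trmx_mul.
by apply/matrixP => a b; rewrite !mxE eq_sym.
Qed.

Lemma Pproj_comp nC d (C : 'M[R]_(nC, d)) (Rs W : {set 'I_nC}) :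
  Pproj C Rs *m Pproj (C *m Pproj C Rs) W = Pproj C (Rs :|: W).
Proof.
apply: trmx_inj; rewrite trmx_mul !Pproj_tr trmx_mul Pproj_tr.
exact: Qproj_comp.
Qed.

Lemma vnorm_tr p q (v : 'M[R]_(p, q)) : vnorm v^T = vnorm v.
Proof. by rewrite /vnorm exchange_big; congr Num.sqrt; apply: eq_bigr => i _; apply: eq_bigr => j _; rewrite mxE. Qed.

Lemma row_tr nC d (C : 'M[R]_(nC, d)) i : row i C = (col i C^T)^T.
Proof. by apply/matrixP => a b; rewrite !mxE. Qed.

Lemma Ctr nC d (C : 'M[R]_(nC, d)) Rs : (C *m Pproj C Rs)^T = Qproj C^T Rs *m C^T.
Proof. by rewrite trmx_mul Pproj_tr. Qed.

Lemma cW_gram nC d (C : 'M[R]_(nC, d)) Rs W :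
  \det (rowsS (C *m Pproj C Rs) W *m (rowsS (C *m Pproj C Rs) W)^T)
  = gram (colsS (Qproj C^T Rs *m C^T) W).
Proof. by rewrite rowsS_tr Ctr trmxK. Qed.

End Final.

Unset Implicit Arguments.

Theorem proposition3p6 (R : realType) (n d dB nC : nat)
  (A : 'M[R]_(n, d)) (B : 'M[R]_(n, dB)) (C : 'M[R]_(nC, d))
  (k r l t : nat) (S : {set 'I_dB}) (Rs : {set 'I_nC}) :
  (1 <= k)%N -> (k <= \rank B)%N -> (1 <= r)%N -> (r <= \rank C)%N ->
  #|S| = l -> (l <= k - 1)%N -> #|Rs| = t -> (t <= r - 1)%N ->
  Pkr (k - l) (r - t) (Qproj B S *m A *m Pproj C Rs) (Qproj B S *m B) (C *m Pproj C Rs)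
  = ((k - l)%:R)^-1 *:
      \sum_(i : 'I_dB | vnorm (col i (Qproj B S *m B)) != 0)
        (vnorm (col i (Qproj B S *m B)) ^+ 2) *:
          Pkr (k - l - 1) (r - t)
            (Qproj B (S :|: [set i]) *m A *m Pproj C Rs)
            (Qproj B (S :|: [set i]) *m B) (C *m Pproj C Rs)
  /\
  Pkr (k - l) (r - t) (Qproj B S *m A *m Pproj C Rs) (Qproj B S *m B) (C *m Pproj C Rs)
  = ((r - t)%:R)^-1 *:
      \sum_(i : 'I_nC | vnorm (row i (C *m Pproj C Rs)) != 0)
        (vnorm (row i (C *m Pproj C Rs)) ^+ 2) *:
          Pkr (k - l) (r - t - 1)
            (Qproj B S *m A *m Pproj C (Rs :|: [set i]))
            (Qproj B S *m B) (C *m Pproj C (Rs :|: [set i])).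
Proof.
move=> k1 _ r1 _ cS lk cR tr.
have mk : (0 < k - l)%N.
  by rewrite subn_gt0; apply: leq_ltn_trans lk _; rewrite subn1 ltn_predL.
have mr : (0 < r - t)%N.
  by rewrite subn_gt0; apply: leq_ltn_trans tr _; rewrite subn1 ltn_predL.
rewrite !subn1.
split.
-
  set C' := C *m Pproj C Rs.
  pose FW (W : {set 'I_nC}) (U : {set 'I_dB}) :=
    char_poly ((Qproj B U *m A *m Pproj C Rs *m Pproj C' W)^T *m
               (Qproj B U *m A *m Pproj C Rs *m Pproj C' W)).
  have pB : forall (S0 T : {set 'I_dB}) W,
      pTW (Qproj B S0 *m A *m Pproj C Rs) (Qproj B S0 *m B) C' T W = FW W (S0 :|: T).
    move=> S0 T W; rewrite /pTW /FW.
    have e : Qproj (Qproj B S0 *m B) T *m (Qproj B S0 *m A *m Pproj C Rs) = Qproj B (S0 :|: T) *m A *m Pproj C Rs.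
      by rewrite -(Qproj_comp B S0 T) !mulmxA.
    by rewrite e.
  have PB : forall (S0 : {set 'I_dB}) m,
      Pkr m (r - t) (Qproj B S0 *m A *m Pproj C Rs) (Qproj B S0 *m B) C'
      = \sum_(W : {set 'I_nC} | #|W| == (r - t)%N)
          \det (rowsS C' W *m (rowsS C' W)^T) *:
          \sum_(T : {set 'I_dB} | #|T| == m)
             gram (colsS (Qproj B S0 *m B) T) *: FW W (S0 :|: T).
    move=> S0 m; rewrite /Pkr; apply: eq_bigr => W _; rewrite scaler_sumr.
    by apply: eq_bigr => T _; rewrite pB scalerA.
  rewrite PB.
  symmetry; under eq_bigr => i _ do rewrite PB; symmetry.
  set Z := fun W (i : 'I_dB) => \sum_(T : {set 'I_dB} | #|T| == (k - l).-1)
      gram (colsS (Qproj B (S :|: [set i]) *m B) T) *: FW W ((S :|: [set i]) :|: T).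
  set w := fun i : 'I_dB => vnorm (col i (Qproj B S *m B)).
  set cW := fun W : {set 'I_nC} => \det (rowsS C' W *m (rowsS C' W)^T).
  transitivity (\sum_(W : {set 'I_nC} | #|W| == (r - t)%N) cW W *:
     ((k - l)%:R^-1 *: \sum_(i : 'I_dB | w i != 0) w i ^+ 2 *: Z W i)).
    by apply: eq_bigr => W _; rewrite (@core R n dB B S (k - l)%N (FW W) mk).
  transitivity ((k - l)%:R^-1 *: \sum_(i : 'I_dB | w i != 0) \sum_(W : {set 'I_nC} | #|W| == (r - t)%N)
     (w i ^+ 2 * cW W) *: Z W i); last first.
    congr (_ *: _); apply: eq_bigr => i _; rewrite scaler_sumr; apply: eq_bigr => W _.
    by rewrite scalerA.
  rewrite exchange_big scaler_sumr; apply: eq_bigr => W _.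
  rewrite !scaler_sumr; apply: eq_bigr => i _.
  rewrite !scalerA; congr (_ *: _).
  by rewrite [cW W / _]mulrC -mulrA [cW W * _]mulrC.
-
  set B' := Qproj B S *m B.
  pose G (T : {set 'I_dB}) (V : {set 'I_nC}) :=
    char_poly ((Qproj B' T *m Qproj B S *m A *m Pproj C V)^T *m
               (Qproj B' T *m Qproj B S *m A *m Pproj C V)).
  pose F V := \sum_(T : {set 'I_dB} | #|T| == (k - l)%N) gram (colsS B' T) *: G T V.
  have pC : forall (R0 W : {set 'I_nC}) T,
      pTW (Qproj B S *m A *m Pproj C R0) B' (C *m Pproj C R0) T W = G T (R0 :|: W).
    by move=> R0 W T; rewrite /pTW /G -!mulmxA Pproj_comp.
  have PC : forall (R0 : {set 'I_nC}) m,
      Pkr (k - l) m (Qproj B S *m A *m Pproj C R0) B' (C *m Pproj C R0)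
      = \sum_(W : {set 'I_nC} | #|W| == m)
          gram (colsS (Qproj C^T R0 *m C^T) W) *: F (R0 :|: W).
    move=> R0 m; rewrite /Pkr; apply: eq_bigr => W _; rewrite cW_gram /F scaler_sumr.
    by apply: eq_bigr => T _; rewrite pC scalerA.
  rewrite PC (core _ _ _ mr).
  congr (_ *: _); apply: eq_big => i.
  + by rewrite row_tr vnorm_tr Ctr.
  + by move=> _; rewrite PC row_tr vnorm_tr Ctr.
Qed.
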